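(* Assume that for every $x\in V$ the functions $s\mapsto H(x,s)$ and $s\mapsto f_l(x,s)$ ($l=1,\dots,m$) are nondecreasing. If $(u^1,\dots,u^m)$ solves the discrete system (S), then $u^i(x)\,u^j(x)=0$ for all $x\in V$ and all $i\neq j$.
   Context: Let $G=(V,E)$ be a finite, connected, undirected graph with at least two vertices. For $x,y\in V$, $d(x,y)$ denotes the graph (shortest-path) distance, and $\deg(x)=|\{y\in V:(x,y)\in E\}|$. The boundary of $G$ is $$\partial G=\Big\{x\in V:\ \exists\, y\in V \text{ with } \tfrac{1}{\deg(x)}\textstyle\sum_{(x,z)\in E} d(z,y)<d(x,y)\Big\},$$ and the interior is $G^o=V\setminus\partial G$. For $r:V\to\mathbb{R}$, the mean value at $x$ is $\overline{r}(x)=\frac{1}{\deg(x)}\sum_{(x,y)\in E} r(y)$. Fix an integer $m\ge1$. Let $H:V\times[0,\infty)\to\mathbb{R}$ and $f_l:V\times[0,\infty)\to\mathbb{R}$ ($l=1,\dots,m$) be continuous in the second variable with $H(x,0)=0$ and $f_l(x,0)=0$ for all $x\in V$; they are extended to negative arguments by $H(x,s)=-H(x,-s)$ and $f_l(x,s)=-f_l(x,-s)$ for $s<0$. Let $\phi^l:\partial G\to[0,\infty)$ ($l=1,\dots,m$) be boundary data satisfying $\phi^i(x)\phi^j(x)=0$ for all $x\in\partial G$ and $i\neq j$. The discrete system (S) for $(u^1,\dots,u^m)$, $u^l:V\to\mathbb{R}$, is: for every $l=1,\dots,m$, $$u^l(x)=\max\Big(H\Big(x,\ \overline{u}^l(x)-\sum_{p\neq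 l}\overline{u}^p(x)\Big)-f_l\big(x,u^l(x)\big),\ 0\Big)\quad (x\in G^o),\qquad u^l(x)=\phi^l(x)\quad (x\in\partial G).$$ *)

(* Defs.v *)
From HB Require Import structures.
From mathcomp Require Import all_boot all_order all_algebra.
From mathcomp Require Import all_classical all_reals all_analysis.
Set Implicit Arguments. Unset Strict Implicit. Unset Printing Implicit Defensive.
Import Order.TTheory GRing.Theory Num.Theory.
Local Open Scope ring_scope.

(* A finite undirected graph on a finType V is given by an adjacency
   relation e (symmetric, irreflexive). *)

Fixpoint walk (V : finType) (e : rel V) (n : nat) (x y : V) : bool :=
  match n with
  | 0 => x == y
  | n'.+1 => [exists z, e x z && walk e n' z y]
  end.

Definition connected_graph (V : finType) (e : rel V) : Prop :=
  forall x y : V, exists n, walk e n x y.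

(* graph distance: least n with a walk of length n (shortest walks in a
   connected graph have length < #|V|) *)
Definition gdist (V : finType) (e : rel V) (x y : V) : nat :=
  find (fun n => walk e n x y) (iota 0 #|V|).

Definition deg (V : finType) (e : rel V) (x : V) : nat := #|[set y | e x y]|.

Definition mean (R : realType) (V : finType) (e : rel V) (r : V -> R) (x : V) : R :=
  (\sum_(y | e x y) r y) / (deg e x)%:R.

Definition gboundary (R : realType) (V : finType) (e : rel V) (x : V) : Prop :=
  exists y : V, mean e (fun z => ((gdist e z y)%:R : R)) x < (gdist e x y)%:R.

Definition ginterior (R : realType) (V : finType) (e : rel V) (x : V) : Prop :=
  ~ gboundary R e x.

Arguments gboundary R {V} e x.
Arguments ginterior R {V} e x.

(* Main.v *)
Require Import Defs.
From HB Require Import structures.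
From mathcomp Require Import all_boot all_order all_algebra.
From mathcomp Require Import all_classical all_reals all_analysis.
From mathcomp Require Import ring lra.
Import Order.TTheory GRing.Theory Num.Theory.
Import numFieldNormedType.Exports.
Local Open Scope classical_set_scope.
Local Open Scope ring_scope.

Theorem lemma1 (R : realType) (V : finType) (e : rel V) (m : nat)
  (H : V -> R -> R) (f : 'I_m -> V -> R -> R)
  (phi : 'I_m -> V -> R) (u : 'I_m -> V -> R) :
  (* graph hypotheses *)
  symmetric e -> irreflexive e -> connected_graph e -> (1 < #|V|)%N ->
  (0 < m)%N ->
  (* H and f_l: continuous on [0,oo), vanish at 0, odd extension *)
  (forall x, {within [set s : R | 0 <= s], continuous (H x)}) ->
  (forall l x, {within [set s : R | 0 <= s], continuous (f l x)}) ->
  (forall x, H x 0 = 0) -> (forall l x, f l x 0 = 0) ->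
  (forall x s, s < 0 -> H x s = - H x (- s)) ->
  (forall l x s, s < 0 -> f l x s = - f l x (- s)) ->
  (* monotonicity assumption *)
  (forall x s t, 0 <= s -> s <= t -> H x s <= H x t) ->
  (forall l x s t, 0 <= s -> s <= t -> f l x s <= f l x t) ->
  (* gboundary data *)
  (forall l x, gboundary R e x -> 0 <= phi l x) ->
  (forall i j x, i != j -> gboundary R e x -> phi i x * phi j x = 0) ->
  (* (u^1,...,u^m) solves (S) *)
  (forall l x, ginterior R e x ->
     u l x = Num.max (H x (mean e (u l) x
                            - \sum_(p < m | p != l) mean e (u p) x)
                      - f l x (u l x)) 0) ->
  (forall l x, gboundary R e x -> u l x = phi l x) ->
  forall (i j : 'I_m) (x : V), i != j -> u i x * u j x = 0.
Proof.
move=> _ _ _ _ _ _ _ H0 f0 Hodd _ Hmon fmon phi0 phiij Sint Sbd i j x ij.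
have unn : forall l y, 0 <= u l y.
  move=> l y; case: (pselect (gboundary R e y)) => hb.
    by rewrite Sbd // phi0.
  by rewrite Sint //; rewrite le_max lexx orbT.
have Mnn : forall l y, 0 <= mean e (u l) y.
  move=> l y; rewrite /mean; apply: divr_ge0; last exact: ler0n.
  by apply: sumr_ge0 => p _.
have Hpos : forall y s, 0 < H y s -> 0 < s.
  move=> y s hs; rewrite ltNge; apply/negP => sle.
  move: sle; rewrite le_eqVlt => /orP[/eqP s0|sl0].
    by move: hs; rewrite s0 H0 ltxx.
  move: hs; rewrite Hodd // oppr_gt0 => hs.
  have := Hmon y 0 (- s) (lexx 0); rewrite H0 oppr_ge0 ltW // => /(_ isT) h.
  by move: (lt_le_trans hs h); rewrite ltxx.
case: (pselect (gboundary R e x)) => hb.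
  by rewrite !Sbd // phiij.
have key : forall l, 0 < u l x ->
    0 < mean e (u l) x - \sum_(p < m | p != l) mean e (u p) x.
  move=> l hl; apply: (Hpos x); move: hl; rewrite Sint //.
  set a := H x _; rewrite lt_max ltxx orbF => h.
  have : 0 <= f l x (u l x) by rewrite -(f0 l x); apply: fmon.
  move=> hf; rewrite subr_gt0 in h; exact: le_lt_trans hf h.
have [hi0|hi0] := eqVneq (u i x) 0; first by rewrite hi0 mul0r.
have hi : 0 < u i x by rewrite lt_neqAle eq_sym hi0 unn.
have [hj0|hj0] := eqVneq (u j x) 0; first by rewrite hj0 mulr0.
have hj : 0 < u j x by rewrite lt_neqAle eq_sym hj0 unn.
have ki := key i hi; have kj := key j hj.
have ji : j != i by rewrite eq_sym.
rewrite (bigD1 j ji) /= in ki.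
rewrite (bigD1 i ij) /= in kj.
set S1 := \sum_(p < m | (p != i) && (p != j)) _ in ki.
set S2 := \sum_(p < m | (p != j) && (p != i)) _ in kj.
have S12 : S1 = S2 by apply: eq_bigl => p; rewrite andbC.
have S1nn : 0 <= S1 by apply: sumr_ge0.
have := addr_gt0 ki kj; rewrite -S12.
move: S1nn; set A := mean e (u i) x; set B := mean e (u j) x.
move=> S1nn h.
have : A - (B + S1) + (B - (A + S1)) = - (S1 + S1) by ring.
move=> eq; move: h; rewrite eq oppr_gt0 => h.
by have := addr_ge0 S1nn S1nn; rewrite leNgt h.
Qed.
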